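(* For every $d\ge2$ and every unitary $U\in\mathcal{U}(d)$, $H_2(U)<1-\frac{2}{d^2+1}$; that is, the upper bound $H_2(U)\le 1-\frac{2}{d^2+1}$ obtained from the maximal stabilizer entropy of the Choi state is not attained by any unitary.
   Context: Let $d=d_L^n$ with $d_L\ge2$, $n\ge1$. On $\mathbb{C}^{d_L}$ let $Z|k\rangle=\omega^k|k\rangle$, $X|k\rangle=|k+1\rangle$ (mod $d_L$), $\omega=e^{2\pi i/d_L}$, $\tau=-e^{i\pi/d_L}$, $D_{(a_1,a_2)}=\tau^{a_1a_2}X^{a_1}Z^{a_2}$, and for $\mathbf a=\mathbf a_1\oplus\cdots\oplus\mathbf a_n\in\mathbb{Z}_{d_L}^{2n}$ let $D_{\mathbf a}=D_{\mathbf a_1}\otimes\cdots\otimes D_{\mathbf a_n}$ acting on $\mathbb{C}^d$. The 2-Clifford entropy of a unitary $U$ on $\mathbb{C}^d$ is $H_2(U)=1-\frac{1}{d^6}\sum_{\mathbf a,\mathbf b}\big|\operatorname{tr}(D_{\mathbf a}^\dagger UD_{\mathbf b}U^\dagger)\big|^4$. *)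

(* Defs.v *)
From HB Require Import structures.
From mathcomp Require Import all_boot all_order all_algebra spectral.
From mathcomp Require Import complex.
From mathcomp Require Import reals trigo.
Set Implicit Arguments. Unset Strict Implicit. Unset Printing Implicit Defensive.
Import Order.TTheory GRing.Theory Num.Theory.
Local Open Scope ring_scope.
Local Open Scope complex_scope.
Local Open Scope sesquilinear_scope.

Section Weyl.
Variable R : realType.
Variable dL : nat.

Definition omega : R[i] :=
  cos (2%:R * pi / dL%:R) +i* sin (2%:R * pi / dL%:R).
Definition tau : R[i] := - (cos (pi / dL%:R) +i* sin (pi / dL%:R)).

Definition Zq : 'M[R[i]]_dL := \matrix_(r, c) ((r == c)%:R * omega ^+ c).
Definition Xq : 'M[R[i]]_dL := \matrix_(r, c) ((r : nat) == ((c : nat) + 1) %% dL)%N%:R.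

Definition Dq (a : 'I_dL * 'I_dL) : 'M[R[i]]_dL :=
  tau ^+ ((a.1 : nat) * (a.2 : nat))%N *: (Xq ^+ (a.1 : nat) *m Zq ^+ (a.2 : nat)).

Variable n : nat.

(* computational basis of (C^{dL})^{\otimes n}: labels k = (k_1,..,k_n) *)
Definition qbasis := {ffun 'I_n -> 'I_dL}.
Definition wlabel := {ffun 'I_n -> 'I_dL * 'I_dL}.

(* D_a = D_{a_1} (x) ... (x) D_{a_n}, written entrywise in the product basis *)
Definition Dw (a : wlabel) : 'M[R[i]]_(#|qbasis|) :=
  \matrix_(r, c) \prod_(j < n)
     Dq (a j) ((enum_val r : qbasis) j) ((enum_val c : qbasis) j).

Definition qdim : nat := (dL ^ n)%N.

Definition H2 (U : 'M[R[i]]_(#|qbasis|)) : R[i] :=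
  1 - (qdim%:R ^+ 6)^-1 *
      \sum_(a : wlabel) \sum_(b : wlabel)
         `|\tr ((Dw a)^t* *m U *m Dw b *m U^t*)| ^+ 4.

End Weyl.

(* Main.v *)
Require Import Defs.
From HB Require Import structures.
From mathcomp Require Import all_boot all_order all_algebra spectral.
From mathcomp Require Import complex.
From mathcomp Require Import reals trigo.
From mathcomp Require Import ring lra.
Import Order.TTheory GRing.Theory Num.Theory.
Local Open Scope ring_scope.

Section S1.
Variable R : realType.
Variable dL : nat.
Hypothesis dL_gt1 : (1 < dL)%N.
Local Notation C := R[i].
Local Notation th := (2%:R * pi / dL%:R : R).

Lemma conjE (a b : R) : Num.conj (Complex a b) = Complex a (- b).
Proof. by []. Qed.

Lemma cisX (t : R) k : (Complex (cos t) (sin t)) ^+ k = Complex (cos (k%:R * t)) (sin (k%:R * t)).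
Proof.
elim: k => [|k IH]; first by rewrite expr0 mul0r cos0 sin0.
rewrite exprS IH -(@natr1 R k) (mulrDl (k%:R) 1) mul1r cosD sinD.
simpc. congr Complex; ring.
Qed.

Lemma omegaX k : omega R dL ^+ k = Complex (cos (k%:R * th)) (sin (k%:R * th)).
Proof. exact: cisX. Qed.

Lemma cis_unit (t : R) : Num.conj (Complex (cos t) (sin t)) * Complex (cos t) (sin t) = 1.
Proof.
rewrite conjE; simpc; rewrite -!expr2 cos2Dsin2.
by congr Complex; ring.
Qed.

Lemma omega_unit : Num.conj (omega R dL) * omega R dL = 1.
Proof. exact: cis_unit. Qed.

Lemma tau_unit : Num.conj (tau R dL) * tau R dL = 1.
Proof. by rewrite /tau rmorphN mulrNN cis_unit. Qed.

Lemma dL_neq0 : (dL%:R : R) != 0.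
Proof. by rewrite pnatr_eq0 -lt0n (ltn_trans _ dL_gt1). Qed.

Lemma omega_dL : omega R dL ^+ dL = 1.
Proof.
rewrite omegaX mulrC divfK ?dL_neq0 // mulr_natl cos2pi sin2pi //.
Qed.

Lemma conj_omega_dL : Num.conj (omega R dL) ^+ dL = 1.
Proof. by rewrite -rmorphXn omega_dL rmorph1. Qed.

Lemma omega_neq1 k : (0 < k < dL)%N -> omega R dL ^+ k != 1.
Proof.
case/andP => k0 kd; rewrite omegaX; apply/negP => /eqP [].
pose x : R := k%:R * pi / dL%:R.
have -> : k%:R * th = x *+ 2 by rewrite /x -mulr_natr; field; rewrite dL_neq0.
rewrite cos_mulr2n => h.
have {h} hc : cos x ^+ 2 = 1 by move: h; rewrite -mulr_natr; lra.
have hx : 0 < x < pi.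
  have dp : (0 : R) < dL%:R by rewrite ltr0n (ltn_trans _ dL_gt1).
  have kp : (0 : R) < k%:R by rewrite ltr0n.
  have kl : (k%:R : R) < dL%:R by rewrite ltr_nat.
  rewrite /x; apply/andP; split.
    by rewrite divr_gt0 // mulr_gt0 // pi_gt0.
  by rewrite ltr_pdivrMr //; have := pi_gt0 R; nra.
have := sin_gt0_pi hx.
move: (sin2cos2 x); rewrite hc subrr => /eqP; rewrite expf_eq0 /= => /eqP ->.
by rewrite ltxx.
Qed.

Lemma sum_deltal (T : finType) (j : T) (F : T -> C) :
  \sum_i (i == j)%:R * F i = F j.
Proof.
rewrite (bigD1 j) //= eqxx mul1r big1 ?addr0 // => i /negbTE ->.
by rewrite mul0r.
Qed.

Lemma sum_deltar (T : finType) (j : T) (F : T -> C) :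
  \sum_i (j == i)%:R * F i = F j.
Proof. by rewrite -(@sum_deltal _ j); apply: eq_bigr => i _; rewrite eq_sym. Qed.

Lemma dL_gt0 : (0 < dL)%N.
Proof. exact: ltn_trans _ dL_gt1. Qed.

Lemma sum_ndelta (v : nat) (F : 'I_dL -> C) (hv : (v < dL)%N) :
  \sum_(m : 'I_dL) ((m : nat) == v)%:R * F m = F (Ordinal hv).
Proof.
rewrite -(@sum_deltal _ (Ordinal hv)); apply: eq_bigr => m _.
by congr (_ %:R * _).
Qed.

Lemma ZqX k (r c : 'I_dL) :
  (Zq R dL ^+ k) r c = (r == c)%:R * omega R dL ^+ (c * k).
Proof.
elim: k c => [|k IH] c.
  by rewrite expr0 muln0 expr0 mulr1 !mxE.
rewrite exprSr -mulmxE mxE.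
under eq_bigr => m _ do rewrite IH mxE.
rewrite (bigD1 c) //= big1 ?addr0; last first.
  by move=> m /negbTE ->; rewrite mul0r mulr0.
by rewrite eqxx mul1r mulnS exprD -mulrA mulrC -mulrA [_ ^+ c * _]mulrC mulrA mulrC.
Qed.

Lemma XqX k (r c : 'I_dL) :
  (Xq R dL ^+ k) r c = ((r : nat) == ((c + k) %% dL)%N)%:R :> C.
Proof.
elim: k r c => [|k IH] r c.
  by rewrite expr0 !mxE addn0 modn_small.
rewrite exprS -mulmxE mxE.
under eq_bigr => m _ do rewrite IH mxE mulrC.
rewrite (sum_ndelta _ _ (ltn_pmod _ dL_gt0)) /=.
by rewrite modnDml addn1 addnS.
Qed.

Lemma DqE (a : 'I_dL * 'I_dL) (r c : 'I_dL) :
  Dq R a r c = tau R dL ^+ (a.1 * a.2) *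
    (((r : nat) == ((c + a.1) %% dL)%N)%:R * omega R dL ^+ (c * a.2)).
Proof.
rewrite /Dq !mxE; congr (_ * _).
under eq_bigr => m _ do rewrite XqX ZqX mulrCA.
by rewrite sum_deltal.
Qed.

Lemma geom_sum (z : C) m : (z - 1) * \sum_(i < m) z ^+ i = z ^+ m - 1.
Proof.
elim: m => [|m IH]; first by rewrite big_ord0 mulr0 expr0 subrr.
by rewrite big_ord_recr /= mulrDr IH exprSr; ring.
Qed.

Lemma geom0 (z : C) : z ^+ dL = 1 -> z != 1 -> \sum_(i < dL) z ^+ i = 0.
Proof.
move=> h1 h2; have := geom_sum z dL; rewrite h1 subrr => /eqP.
by rewrite mulf_eq0 subr_eq0 (negbTE h2) /= => /eqP.
Qed.

Lemma omegaX_neq0 k : omega R dL ^+ k != 0.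
Proof.
apply/negP => /eqP h; have := omega_unit.
have := (@oner_neq0 C); move=> h0.
have : Num.conj (omega R dL ^+ k) * omega R dL ^+ k = 1.
  by rewrite rmorphXn -exprMn omega_unit expr1n.
by rewrite h mulr0 => /esym/eqP; rewrite oner_eq0.
Qed.

Lemma omega_inj (c c' : 'I_dL) : omega R dL ^+ c = omega R dL ^+ c' -> c = c'.
Proof.
wlog: c c' / (c <= c')%N.
  move=> W h; case: (leqP c c') => hc; first exact: W.
  by apply/esym/W => //; exact: ltnW.
move=> le h; apply/val_inj/eqP; rewrite eqn_leq le /=.
rewrite leqNgt; apply/negP => lt; have := @omega_neq1 (c' - c)%N.
rewrite subn_gt0 lt /= (leq_ltn_trans (leq_subr _ _) (ltn_ord c')) => /(_ isT) hne.
move: h; rewrite -(subnKC le) exprD => /eqP.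
rewrite -subr_eq0 -{1}(mulr1 (omega R dL ^+ c)) -mulrBr mulf_eq0 (negbTE (omegaX_neq0 _)) /=.
by rewrite subr_eq0 eq_sym (negbTE hne).
Qed.

Lemma gsum_omega (c c' : 'I_dL) :
  \sum_(i < dL) (Num.conj (omega R dL ^+ c) * omega R dL ^+ c') ^+ i
    = dL%:R * (c == c')%:R.
Proof.
case: eqP => [<-|ne].
  rewrite rmorphXn -exprMn omega_unit expr1n mulr1.
  under eq_bigr do rewrite expr1n.
  by rewrite sumr_const card_ord.
rewrite mulr0; apply: geom0.
  by rewrite rmorphXn exprMn -!exprM mulnC [(c' * dL)%N]mulnC !exprM conj_omega_dL omega_dL !expr1n mulr1.
apply/negP => /eqP h; apply: ne; apply: omega_inj.
have u : omega R dL ^+ c * Num.conj (omega R dL ^+ c) = 1.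
  by rewrite rmorphXn -exprMn mulrC omega_unit expr1n.
by rewrite -[LHS]mulr1 -h mulrA u mul1r.
Qed.

Lemma count_a1 (r r' c : 'I_dL) :
  \sum_(a : 'I_dL) ((r : nat) == ((c + a) %% dL)%N)%:R *
                    ((r' : nat) == ((c + a) %% dL)%N)%:R = (r == r')%:R :> C.
Proof.
case: (eqVneq r r') => [<-|ne].
  under eq_bigr => a _ do rewrite -natrM mulnb andbb.
  have hv : ((r + (dL - c)) %% dL < dL)%N := ltn_pmod _ dL_gt0.
  have e : ((c + (r + (dL - c)) %% dL) %% dL)%N = r.
    by rewrite modnDmr addnCA subnKC ?modnDr ?modn_small // ltnW.
  rewrite (bigD1 (Ordinal hv)) //= big1 ?addr0 ?e ?eqxx //.
  move=> a ne; apply/eqP; rewrite pnatr_eq0 eqb0; apply/negP => /eqP h.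
  move/eqP: ne; apply; apply/val_inj => /=.
  move: h; rewrite -{1}e => /eqP; rewrite eqn_modDl (modn_small (ltn_ord a)).
  by rewrite modn_small ?hv // => /eqP.
rewrite big1 // => a _.
case: eqP => [h1|]; case: eqP => [h2|] //=; rewrite ?mul0r ?mulr0 //.
by move/eqP: ne; case; apply/val_inj; rewrite /= h1 h2.
Qed.

Lemma Dq_complete (r c r' c' : 'I_dL) :
  \sum_(x : 'I_dL * 'I_dL) Num.conj (Dq R x r c) * Dq R x r' c'
    = dL%:R * ((r == r') && (c == c'))%:R.
Proof.
pose G a1 a2 := Num.conj (Dq R (a1, a2) r c) * Dq R (a1, a2) r' c'.
rewrite (eq_bigr (fun p => G p.1 p.2)); last by case.
rewrite -pair_bigA /= /G.
have step : forall a1 a2 : 'I_dL, Num.conj (Dq R (a1, a2) r c) * Dq R (a1, a2) r' c' =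
   (((r : nat) == ((c + a1) %% dL)%N)%:R * ((r' : nat) == ((c' + a1) %% dL)%N)%:R) *
   (Num.conj (omega R dL ^+ c) * omega R dL ^+ c') ^+ a2.
  move=> a1 a2; rewrite !DqE /= !rmorphM /= !rmorph_nat.
  have tt : Num.conj (tau R dL ^+ (a1 * a2)) * tau R dL ^+ (a1 * a2) = 1.
    by rewrite rmorphXn -exprMn tau_unit expr1n.
  rewrite mulrACA tt mul1r mulrACA; congr (_ * _).
  by rewrite exprMn !rmorphXn -!exprM.
under eq_bigr => a1 _ do (under eq_bigr => a2 _ do rewrite step; rewrite -mulr_sumr gsum_omega).
case: (eqVneq c c') => [<-|ne].
  by rewrite mulr1 andbT mulrC -mulr_suml; congr (_ * _); exact: count_a1.
rewrite andbF /= !mulr0 big1 // => a _.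
by rewrite !mulr0.
Qed.
End S1.


Section Gen.
Variable C : numClosedFieldType.

Lemma gsum_deltar (T : finType) (j : T) (F : T -> C) :
  \sum_i (j == i)%:R * F i = F j.
Proof.
rewrite (bigD1 j) //= eqxx mul1r big1 ?addr0 // => i.
by rewrite eq_sym => /negbTE ->; rewrite mul0r.
Qed.

Lemma parseval (A P : finType) (f : A -> P -> C) (m : P -> C) (K : C) :
  (forall p q, \sum_a Num.conj (f a p) * f a q = K * (p == q)%:R) ->
  \sum_a `|\sum_p Num.conj (f a p) * m p| ^+ 2 = K * \sum_p `|m p| ^+ 2.
Proof.
move=> hc.
under eq_bigr => a _ do rewrite normCK rmorph_sum mulr_suml.
under eq_bigr => a _ do under eq_bigr => p _ do rewrite mulr_sumr.
rewrite exchange_big /=.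
under eq_bigr => p _ do rewrite exchange_big /=.
have e : forall p q, \sum_a Num.conj (f a p) * m p * Num.conj (Num.conj (f a q) * m q)
    = (p == q)%:R * (K * (m p * Num.conj (m q))).
  move=> p q.
  transitivity (m p * Num.conj (m q) * \sum_a Num.conj (f a p) * f a q); last first.
    by rewrite hc; ring.
  rewrite mulr_sumr; apply: eq_bigr => a _; rewrite rmorphM /= conjCK; ring.
under eq_bigr => p _ do under eq_bigr => q _ do rewrite e.
under eq_bigr => p _ do rewrite gsum_deltar.
by rewrite -mulr_sumr; under eq_bigr => p _ do rewrite normCK.
Qed.
End Gen.

Section S2.
Variable R : realType.
Variable dL : nat.
Hypothesis dL_gt1 : (1 < dL)%N.
Variable n : nat.
Local Notation C := R[i].
Local Notation Q := (qbasis dL n).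
Local Notation W := (wlabel dL n).
Local Notation d := #|Q|.

Lemma prod_bool (bs : 'I_n -> bool) :
  \prod_(j < n) (bs j)%:R = [forall j, bs j]%:R :> C.
Proof.
case: forallP => h.
  by rewrite big1 // => j _; rewrite h.
have [j hj] : exists j, ~~ bs j.
  by apply/existsP; rewrite -negb_forall; apply/forallP.
by rewrite (bigD1 j) //= (negbTE hj) mul0r.
Qed.

Lemma Dw_complete (r c r' c' : 'I_d) :
  \sum_(a : W) Num.conj (Dw R a r c) * Dw R a r' c'
    = (dL ^ n)%:R * ((r == r') && (c == c'))%:R.
Proof.
under eq_bigr => a _ do rewrite !mxE rmorph_prod -big_split /=.
pose F (j : 'I_n) (x : 'I_dL * 'I_dL) :=
  Num.conj (Dq R x ((enum_val r : Q) j) ((enum_val c : Q) j)) *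
  Dq R x ((enum_val r' : Q) j) ((enum_val c' : Q) j).
rewrite -(bigA_distr_bigA F) /F.
under eq_bigr => j _ do rewrite (@Dq_complete R dL dL_gt1).
rewrite big_split /= prodr_const card_ord natrX; congr (_ * _).
rewrite prod_bool; congr ((nat_of_bool _) %:R).
rewrite -(inj_eq enum_val_inj) -[c == c'](inj_eq enum_val_inj).
apply/idP/idP => [/forallP h|/andP[/eqP -> /eqP ->]]; last by apply/forallP => j; rewrite !eqxx.
by apply/andP; split; apply/eqP/ffunP => j; have /andP[/eqP ? /eqP ?] := h j.
Qed.

Local Open Scope sesquilinear_scope.

Lemma tr_expand (A M : 'M[C]_d) :
  \tr (A^t* *m M) = \sum_(p : 'I_d * 'I_d) Num.conj (A p.1 p.2) * M p.1 p.2.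
Proof.
rewrite /mxtrace; under eq_bigr => i _ do rewrite mxE.
rewrite exchange_big pair_bigA /=; apply: eq_bigr => p _.
by rewrite !mxE.
Qed.

Lemma parseval_D (M : 'M[C]_d) :
  \sum_(a : W) `|\tr ((Dw R a)^t* *m M)| ^+ 2
    = (dL ^ n)%:R * \sum_(p : 'I_d * 'I_d) `|M p.1 p.2| ^+ 2.
Proof.
under eq_bigr => a _ do rewrite tr_expand.
apply: (@parseval _ _ _ (fun a p => Dw R a p.1 p.2)) => -[r c] [r' c'] /=.
by rewrite Dw_complete.
Qed.

Lemma frob (M : 'M[C]_d) :
  \sum_(p : 'I_d * 'I_d) `|M p.1 p.2| ^+ 2 = \tr (M *m M^t*).
Proof.
rewrite /mxtrace; under [RHS]eq_bigr => i _ do rewrite mxE.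
rewrite pair_bigA /=; apply: eq_bigr => p _.
by rewrite !mxE normCK.
Qed.

Lemma adj_mul m1 m2 m3 (A : 'M[C]_(m1, m2)) (B : 'M[C]_(m2, m3)) :
  (A *m B)^t* = B^t* *m A^t*.
Proof.
apply/matrixP => i j; rewrite !mxE rmorph_sum; apply: eq_bigr => k _.
by rewrite !mxE rmorphM mulrC.
Qed.

Lemma frob_conj (U A : 'M[C]_d) : U \is unitarymx ->
  \tr ((U *m A *m U^t*) *m (U *m A *m U^t*)^t*) = \tr (A *m A^t*).
Proof.
move=> hU.
rewrite !adj_mul trmxCK !mulmxA (mulmxKtV _ hU) //.
rewrite -!mulmxA mxtrace_mulC -!mulmxA.
by rewrite [U^t* *m U](_ : _ = 1%:M) ?mulmx1 //; rewrite -[U^t*]mul1mx (mulmxKtV _ hU).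
Qed.

Lemma adj1 : (1%:M : 'M[C]_d)^t* = 1%:M.
Proof. by apply/matrixP => i j; rewrite !mxE eq_sym rmorph_nat. Qed.

Lemma card_Q : d = (dL ^ n)%N.
Proof. by rewrite /qbasis card_ffun !card_ord. Qed.

Lemma card_W : #|W| = ((dL ^ n) ^ 2)%N.
Proof. by rewrite /wlabel card_ffun card_prod !card_ord -expnM mulnC expnM. Qed.

Lemma dL_gt0' : (0 < dL)%N.
Proof. exact: ltn_trans _ dL_gt1. Qed.

Definition z0 : 'I_dL := Ordinal dL_gt0'.
Definition a0 : W := [ffun => (z0, z0)].

Lemma Dw0 : Dw R a0 = 1%:M.
Proof.
apply/matrixP => r c; rewrite !mxE.
under eq_bigr => j _ do rewrite ffunE DqE /= ?muln0 ?expr0 ?mul1r ?mulr1 ?addn0 ?modn_small //.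
rewrite prod_bool -(inj_eq enum_val_inj); congr ((nat_of_bool _) %:R).
apply/idP/idP => [/forallP h|/eqP ->]; last by apply/forallP => j.
by apply/eqP/ffunP => j; apply/val_inj/eqP; exact: h.
Qed.

Lemma main_ineq (hn : (0 < n)%N) (U : 'M[C]_d) (hU : U \is unitarymx) :
  H2 U < 1 - 2%:R / ((qdim dL n)%:R ^+ 2 + 1).
Proof.
set D : C := (dL ^ n)%:R.
pose t a b := \tr ((Dw R a)^t* *m U *m Dw R b *m U^t*).
have tE : forall a b, t a b = \tr ((Dw R a)^t* *m (U *m Dw R b *m U^t*)).
  by move=> a b; rewrite /t !mulmxA.
have row : forall b, \sum_a `|t a b| ^+ 2 = D * \tr (Dw R b *m (Dw R b)^t*).
  move=> b; under eq_bigr => a _ do rewrite tE.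
  by rewrite parseval_D frob frob_conj.
have dD : (d%:R : C) = D by rewrite card_Q.
have tot : \sum_(b : W) \tr (Dw R b *m (Dw R b)^t*) = D ^+ 3.
  under eq_bigr => b _ do rewrite -frob.
  rewrite exchange_big /=.
  under eq_bigr => p _ do (under eq_bigr => b _ do rewrite normCK mulrC; rewrite Dw_complete !eqxx /= mulr1).
  rewrite sumr_const card_prod card_ord.
  rewrite (_ : (dL ^ n)%:R *+ (#|Q| * #|Q|) = D * (#|Q| * #|Q|)%:R); last by rewrite mulr_natr.
  by rewrite natrM dD /D; ring.
have trow0 : \tr (Dw R a0 *m (Dw R a0)^t*) = D by rewrite Dw0 adj1 mulmx1 mxtrace1 dD.
have t00 : t a0 a0 = D.
  by rewrite /t Dw0 adj1 mul1mx mulmx1 (unitarymxP hU) mxtrace1 dD.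
have HS : H2 U = 1 - ((qdim dL n)%:R ^+ 6)^-1 * \sum_a \sum_b `|t a b| ^+ 4 by [].
pose Gf b := \sum_a (2%:R * `|t a b| ^+ 2 - 1).
have GfE : forall b, Gf b = 2%:R * (D * \tr (Dw R b *m (Dw R b)^t*)) - D ^+ 2.
  move=> b; rewrite /Gf sumrB -mulr_sumr row sumr_const card_W natrX //.
have key : 2%:R * D ^+ 4 - D ^+ 2 <= \sum_a \sum_b `|t a b| ^+ 4.
  rewrite exchange_big (bigD1 a0) //=.
  have h1 : D ^+ 4 <= \sum_a `|t a a0| ^+ 4.
    rewrite (bigD1 a0) //= t00 /D normr_nat lerDl.
    by apply: sumr_ge0 => a _; rewrite exprn_ge0 ?normr_ge0.
  have h2 : \sum_(b | b != a0) Gf b <= \sum_(b | b != a0) \sum_a `|t a b| ^+ 4.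
    apply: ler_sum => b _; apply: ler_sum => a _.
    have -> : `|t a b| ^+ 4 = (`|t a b| ^+ 2) ^+ 2 by rewrite -exprM.
    set y := `|t a b| ^+ 2.
    rewrite -subr_ge0 (_ : y ^+ 2 - (2%:R * y - 1) = (y - 1) ^+ 2); last by ring.
    apply: real_exprn_even_ge0 => //.
    by rewrite rpredB ?real1 // ger0_real // /y exprn_ge0 ?normr_ge0.
  have h3 : \sum_(b | b != a0) Gf b = \sum_b Gf b - Gf a0.
    by rewrite [X in _ = X - _](bigD1 a0) //= addrC addrK.
  have h4 : \sum_b Gf b = 2%:R * D ^+ 4 - D ^+ 4.
    under eq_bigr => b _ do rewrite GfE.
    rewrite sumrB -mulr_sumr -mulr_sumr tot sumr_const card_W.
    rewrite (_ : D ^+ 2 *+ ((dL ^ n) ^ 2) = D ^+ 2 * D ^+ 2); last by rewrite -mulr_natr natrX.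
    ring.
  rewrite h3 h4 GfE trow0 in h2.
  apply: le_trans (lerD h1 h2).
  by rewrite le_eqVlt; apply/orP; left; apply/eqP; ring.
have D1 : 1 < D by rewrite /D ltr1n -(exp1n n) ltn_exp2r.
have D0 : 0 < D := lt_trans ltr01 D1.
have D21 : 0 < D ^+ 2 + 1 by rewrite addr_gt0 ?exprn_gt0.
rewrite HS ltrD2l ltrN2.
apply: lt_le_trans (ler_wpM2l _ key); last by rewrite invr_ge0 exprn_ge0 // ltW.
rewrite -subr_gt0.
have -> : ((qdim dL n)%:R ^+ 6)^-1 * (2%:R * D ^+ 4 - D ^+ 2) - 2%:R / (D ^+ 2 + 1)
    = (D ^+ 2 - 1) / (D ^+ 4 * (D ^+ 2 + 1)).
  rewrite -/D; field.
  by rewrite (gt_eqF D21) (gt_eqF D0).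
rewrite divr_gt0 // ?subr_gt0 ?exprn_egt1 // mulr_gt0 // exprn_gt0 //.
Qed.
End S2.

Theorem theorem5 (R : realType) (dL n : nat) (hdL : (2 <= dL)%N) (hn : (1 <= n)%N)
  (U : 'M[R[i]]_(#|qbasis dL n|)) (hU : U \is unitarymx) :
  H2 U < 1 - 2%:R / ((qdim dL n)%:R ^+ 2 + 1).
Proof. have h := (@main_ineq R dL hdL n hn U hU). exact h. Qed.
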